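(* Let $(V,\mathrm d)$ be the domain complex of a closed Hilbert complex $(W,\mathrm d)$, and let $(V_h,\mathrm d_h)$, $h>0$, be a family of domain complexes of closed Hilbert complexes $(W_h,\mathrm d_h)$, equipped with morphisms $i_h\colon V_h\to V$ that extend to bounded maps $W_h\to W$, uniformly bounded in $h$, and morphisms $\pi_h\colon V\to V_h$ (bounded in the $V$-norms) with $\pi_h^k\circ i_h^k=\mathrm{id}_{V_h^k}$. Let $c_P$ be the Poincaré constant of $V$ (i.e. $\|v\|_V\le c_P\|\mathrm d v\|$ for $v\in(\mathfrak Z^k)^\perp$ in each degree). Then there exists a constant $\gamma_h>0$, depending only on $c_P$ and the norms of $i_h$ and $\pi_h$, such that for any $(\sigma_h,u_h,p_h)\in V_h^{k-1}\times V_h^k\times\mathfrak H_h^k$ there exists $(\tau_h,v_h,q_h)\in V_h^{k-1}\times V_h^k\times\mathfrak H_h^k$ with \[B_h(\sigma_h,u_h,p_h;\tau_h,v_h,q_h)\ge\gamma_h\big(\|\sigma_h\|_{V_h}+\|u_h\|_{V_h}+\|p_h\|_h\big)\big(\|\tau_h\|_{V_h}+\|v_h\|_{V_h}+\|q_h\|_h\big).\]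
   Context: A Hilbert complex $(W,\mathrm d)$ is a sequence of Hilbert spaces $W^k$ with closed densely defined linear maps $\mathrm d^k\colon V^k\subset W^k\to V^{k+1}\subset W^{k+1}$ with $\mathrm d^k\circ\mathrm d^{k-1}=0$; it is closed if each $\mathrm d^kV^k$ is closed. Its domain complex $(V,\mathrm d)$ consists of the $V^k$ with graph inner product $\langle u,v\rangle_V=\langle u,v\rangle+\langle\mathrm du,\mathrm dv\rangle$. A morphism of domain complexes is a sequence of bounded linear maps commuting with the differentials. $\mathfrak Z^k=\ker\mathrm d^k$, $(\mathfrak Z^k)^\perp$ its orthogonal complement in $V^k$. For $W_h$: $\langle\cdot,\cdot\rangle_h$, $\|\cdot\|_h$ are the $W_h$ inner product and norm, $\mathfrak B_h^k=\mathrm d_h V_h^{k-1}$, $\mathfrak H_h^k=\ker\mathrm d_h^k\cap(\mathfrak B_h^k)^\perp$. The bilinear form is $B_h(\sigma_h,u_h,p_h;\tau_h,v_h,q_h)=\langle\sigma_h,\tau_h\rangle_h-\langle u_h,\mathrm d_h\tau_h\rangle_h+\langle\mathrm d_h\sigma_h,v_h\rangle_h+\langle\mathrm d_hu_h,\mathrm d_hv_h\rangle_h+\langle p_h,v_h\rangle_h-\langle u_h,q_h\rangle_h$. *)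

(* Defs.v *)
From HB Require Import structures.
From mathcomp Require Import all_boot all_order all_algebra.
From mathcomp Require Import reals.
Set Implicit Arguments. Unset Strict Implicit. Unset Printing Implicit Defensive.
Import Order.TTheory GRing.Theory Num.Theory.
Local Open Scope ring_scope.

Record hspace (R : realType) := HSpace {
  hcar : lmodType R;
  hip : hcar -> hcar -> R;
  hip_sym : forall x y, hip x y = hip y x;
  hip_linl : forall a x y z, hip (a *: x + y) z = a * hip x z + hip y z;
  hip_ge0 : forall x, 0 <= hip x x;
  hip_def : forall x, hip x x = 0 -> x = 0;
  hip_complete : forall u : nat -> hcar,
    (forall e : R, 0 < e -> exists N, forall m n, (N <= m)%N -> (N <= n)%N ->
        Num.sqrt (hip (u m - u n) (u m - u n)) < e) ->
    exists x, forall e : R, 0 < e -> exists N, forall n, (N <= n)%N ->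
        Num.sqrt (hip (u n - x) (u n - x)) < e
}.
Arguments hip {R} h _ _.

Section HS.
Variables (R : realType) (H : hspace R).
Definition hnorm (x : hcar H) : R := Num.sqrt (hip H x x).
Definition hconv (u : nat -> hcar H) (x : hcar H) : Prop :=
  forall e : R, 0 < e -> exists N, forall n, (N <= n)%N -> hnorm (u n - x) < e.
Definition hclosed (S : hcar H -> Prop) : Prop :=
  forall u x, (forall n, S (u n)) -> hconv u x -> S x.
Definition hdense (S : hcar H -> Prop) : Prop :=
  forall x (e : R), 0 < e -> exists y, S y /\ hnorm (x - y) < e.
Definition subspace (S : hcar H -> Prop) : Prop :=
  S 0 /\ forall (a : R) x y, S x -> S y -> S (a *: x + y).
End HS.

(** * Hilbert complexes, indexed by degrees k : nat.
    [W k] is the Hilbert space W^k, [dom k] the domain V^k of d^k,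
    and [d k] : W^k -> W^{k+1} represents d^k (only its values on V^k matter). *)
Unset Implicit Arguments.
Record hcomplex (R : realType) := HComplex {
  W : nat -> hspace R;
  dom : forall k, hcar (W k) -> Prop;
  d : forall k, hcar (W k) -> hcar (W k.+1);
  dom_subspace : forall k : nat, subspace (dom k);
  d_lin : forall k (a : R) x y, dom k x -> dom k y -> d k (a *: x + y) = a *: d k x + d k y;
  d_dom : forall k x, dom k x -> dom k.+1 (d k x);
  d_dd : forall k x, dom k x -> d k.+1 (d k x) = 0;
  d_dense : forall k : nat, hdense (dom k);
  d_closed_op : forall k (u : nat -> hcar (W k)) x y,
    (forall n, dom k (u n)) -> hconv u x -> hconv (fun n => d k (u n)) y ->
    dom k x /\ d k x = y
}.
Set Implicit Arguments.
Arguments W {R} h k.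
Arguments dom {R} h k _.
Arguments d {R} h {k} _.

Section Complex.
Variables (R : realType) (X : hcomplex R).
Definition closed_complex : Prop :=
  forall k, hclosed (fun y : hcar (W X k.+1) => exists x, dom X k x /\ d X x = y).
Definition vip k (x y : hcar (W X k)) : R := hip (W X k) x y + hip (W X k.+1) (d X x) (d X y).
Definition vnorm k (x : hcar (W X k)) : R := Num.sqrt (vip x x).
Definition Zk k (x : hcar (W X k)) : Prop := dom X k x /\ d X x = 0.
Definition Zperp k (x : hcar (W X k)) : Prop := dom X k x /\ forall z, Zk z -> vip x z = 0.
Definition poincare (cP : R) : Prop :=
  forall k (v : hcar (W X k)), Zperp v -> vnorm v <= cP * hnorm (d X v).
Definition Bk k (y : hcar (W X k.+1)) : Prop := exists x, dom X k x /\ d X x = y.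
Definition harmonic k (q : hcar (W X k.+1)) : Prop :=
  Zk q /\ forall b, Bk b -> hip (W X k.+1) q b = 0.
(** the bilinear form B_h, with sigma in degree k, u and p in degree k+1 *)
Definition Bform k (sigma : hcar (W X k)) (u p : hcar (W X k.+1))
  (tau : hcar (W X k)) (v q : hcar (W X k.+1)) : R :=
  hip (W X k) sigma tau - hip (W X k.+1) u (d X tau) + hip (W X k.+1) (d X sigma) v
  + hip (W X k.+2) (d X u) (d X v) + hip (W X k.+1) p v - hip (W X k.+1) u q.
End Complex.

(** A morphism of domain complexes Y -> X given by a map defined on all of W
    (i.e. together with its extension W_Y -> W_X), which is linear and bounded
    on W, maps V to V, and commutes with d on V. *)
Definition ext_morphism (R : realType) (Y X : hcomplex R)
  (f : forall k, hcar (W Y k) -> hcar (W X k)) : Prop :=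
  [/\ forall k (a : R) x y, f k (a *: x + y) = a *: f k x + f k y,
      exists C : R, forall k x, hnorm (f k x) <= C * hnorm x,
      forall k x, dom Y k x -> dom X k (f k x)
    & forall k x, dom Y k x -> f k.+1 (d Y x) = d X (f k x)].

Definition dmorphism (R : realType) (X Y : hcomplex R)
  (f : forall k, hcar (W X k) -> hcar (W Y k)) : Prop :=
  [/\ forall k (a : R) x y, dom X k x -> dom X k y -> f k (a *: x + y) = a *: f k x + f k y,
      exists C : R, forall k x, dom X k x -> vnorm (f k x) <= C * vnorm x,
      forall k x, dom X k x -> dom Y k (f k x)
    & forall k x, dom X k x -> f k.+1 (d X x) = d Y (f k x)].

(* Main.v *)
Require Import Defs.
From HB Require Import structures.
From mathcomp Require Import all_boot all_order all_algebra.
From mathcomp Require Import reals boolp classical_sets.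
From mathcomp Require Import ring lra.
Import Order.TTheory GRing.Theory Num.Theory.
Local Open Scope ring_scope.

Lemma fin_aux (R : realType) (l a w T r i j eps : R) :
  0 <= T -> 0 <= r -> 0 < eps ->
  2 * l * (a + w) <= l ^+ 2 * T + i -> i <= j -> 0 + j < eps / 2 ->
  r < (eps / (4 * (l ^+ 2 * T + 1))) ^+ 2 -> w ^+ 2 <= r * T ->
  2 * l * a <= l ^+ 2 * T + eps.
Proof.
move=> T0 r0 e0 h1 h2 h3 h4 h5.
set P := l ^+ 2 * T in h1 h4 *.
have P0 : 0 <= P by rewrite /P mulr_ge0 // sqr_ge0.
set e' := eps / (4 * (P + 1)) in h4.
have e'E : e' * (4 * (P + 1)) = eps by rewrite /e' mulfVK // mulf_neq0 // lt0r_neq0 //; lra.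
have q1 : (2 * l * w) ^+ 2 <= 4 * P * e' ^+ 2.
  have l2 : 0 <= l ^+ 2 by exact: sqr_ge0.
  have : (2 * l * w) ^+ 2 = 4 * l ^+ 2 * w ^+ 2 by ring.
  move=> ->; rewrite /P.
  have a1 : l ^+ 2 * w ^+ 2 <= l ^+ 2 * (r * T) by exact: ler_wpM2l.
  have a2 : r * T <= e' ^+ 2 * T by apply: ler_wpM2r => //; exact: ltW.
  have a3 : l ^+ 2 * (r * T) <= l ^+ 2 * (e' ^+ 2 * T) by exact: ler_wpM2l.
  have -> : 4 * (l ^+ 2 * T) * e' ^+ 2 = 4 * (l ^+ 2 * (e' ^+ 2 * T)) by ring.
  lra.
have q2 : 4 * P * e' ^+ 2 <= (eps / 2) ^+ 2.
  have : (eps / 2) ^+ 2 = 4 * (P + 1) ^+ 2 * e' ^+ 2 by rewrite -e'E; field.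
  move=> ->; have : 0 <= e' ^+ 2 by exact: sqr_ge0. nra.
have q3 : - (2 * l * w) <= eps / 2.
  have : 0 < eps / 2 by lra. nra.
nra.
Qed.
Lemma zero_aux (R : realType) (a T : R) : 0 <= T ->
  2 * (a / (T + 1)) * a <= (a / (T + 1)) ^+ 2 * T -> a = 0.
Proof.
move=> T0; have aE : a = (a / (T + 1)) * (T + 1) by rewrite mulfVK // lt0r_neq0 //; lra.
move: (a / (T + 1)) aE => l -> h.
have : l ^+ 2 * (T + 2) <= 0 by nra.
have : 0 <= l ^+ 2 by exact: sqr_ge0.
move=> h1 h2; have : l ^+ 2 = 0 by nra.
by move/eqP; rewrite sqrf_eq0 => /eqP ->; rewrite mul0r.
Qed.

Arguments fin_aux {R l a w T r i j eps}.
Arguments zero_aux {R a T}.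
Section HSL.
Variables (R : realType) (H : hspace R).
Local Notation ip := (hip H).
Local Notation V := (hcar H).

Lemma ip0l (z : V) : ip 0 z = 0.
Proof.
have := @hip_linl R H 1 0 0 z; rewrite scale1r addr0 mul1r => e.
by have := congr1 (fun t => t - ip 0 z) e; rewrite subrr addrK.
Qed.
Lemma ipDl (x y z : V) : ip (x + y) z = ip x z + ip y z.
Proof. by have := @hip_linl R H 1 x y z; rewrite scale1r mul1r. Qed.
Lemma ipZl a (x z : V) : ip (a *: x) z = a * ip x z.
Proof. by have := @hip_linl R H a x 0 z; rewrite addr0 ip0l addr0. Qed.
Lemma ipNl (x z : V) : ip (- x) z = - ip x z.
Proof. by rewrite -scaleN1r ipZl mulN1r. Qed.
Lemma ipBl (x y z : V) : ip (x - y) z = ip x z - ip y z.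
Proof. by rewrite ipDl ipNl. Qed.
Lemma ip0r (z : V) : ip z 0 = 0.
Proof. by rewrite hip_sym ip0l. Qed.
Lemma ipDr (x y z : V) : ip z (x + y) = ip z x + ip z y.
Proof. by rewrite hip_sym ipDl !(@hip_sym R H z). Qed.
Lemma ipZr a (x z : V) : ip z (a *: x) = a * ip z x.
Proof. by rewrite hip_sym ipZl hip_sym. Qed.
Lemma ipNr (x z : V) : ip z (- x) = - ip z x.
Proof. by rewrite hip_sym ipNl hip_sym. Qed.
Lemma ipBr (x y z : V) : ip z (x - y) = ip z x - ip z y.
Proof. by rewrite ipDr ipNr. Qed.

Definition ipE := (ipDl, ipBl, ipNl, ipZl, ipDr, ipBr, ipNr, ipZr, ip0l, ip0r).

Lemma ip2 (x y : V) : 2 * ip x y <= ip x x + ip y y.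
Proof.
have := @hip_ge0 R H (x - y); rewrite !ipE (@hip_sym R H y x); lra.
Qed.

Lemma ipCS (x y : V) : ip x y ^+ 2 <= ip x x * ip y y.
Proof.
have [y0|ypos] := eqVneq (ip y y) 0.
  by rewrite (hip_def y0) ip0r ip0l expr0n /= mulr0.
have yp : 0 < ip y y by rewrite lt_neqAle eq_sym ypos hip_ge0.
have := @hip_ge0 R H (x - (ip x y / ip y y) *: y); rewrite !ipE (@hip_sym R H y x).
move: yp; move: (ip x y) (ip y y) (ip x x) => c b a bp h.
have e : (a - c / b * c - (c / b * c - c / b * (c / b * b))) * b = a * b - c ^+ 2.
  by field; rewrite lt0r_neq0.
have := mulr_ge0 h (ltW bp); rewrite e; lra.
Qed.

Lemma hnorm_ge0 (x : V) : 0 <= hnorm x. Proof. exact: sqrtr_ge0. Qed.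
Lemma hnorm_sq (x : V) : hnorm x ^+ 2 = ip x x.
Proof. by rewrite sqr_sqrtr // hip_ge0. Qed.

Lemma sqrt_lt_sq (a e : R) : 0 <= a -> Num.sqrt a < e -> a < e ^+ 2.
Proof.
move=> a0 h; have e0 : 0 <= Num.sqrt a by exact: sqrtr_ge0.
have := sqr_sqrtr a0; move: h e0; set s := Num.sqrt a => h e0 <-; nra.
Qed.

Lemma sq_lt_sqrt (a e : R) : 0 < e -> a < e ^+ 2 -> Num.sqrt a < e.
Proof.
move=> e0 h; apply: (@lt_le_trans _ _ (Num.sqrt (e ^+ 2))).
  by rewrite ltr_sqrt // exprn_gt0.
by rewrite sqrtr_sqr gtr0_norm.
Qed.

Lemma para_aux (A a b P Q C d i j : R) :
  A - a - (a - P) < d + i ->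
  A - b - (b - Q) < d + j ->
  d <= A - (2^-1 * a + 2^-1 * b) - (2^-1 * (a - (2^-1 * P + 2^-1 * C)) + 2^-1 * (b - (2^-1 * C + 2^-1 * Q))) ->
  P - C - (C - Q) <= 2 * i + 2 * j.
Proof. move=> *; lra. Qed.

Lemma cauchy_aux (c a b i f : R) : c <= 2 / a + 2 / b -> a^-1 <= i -> b^-1 <= i -> i < f / 4 -> c < f.
Proof. move=> *; lra. Qed.

Lemma key_aux (A b P c g T d i l : R) :
  A - b - (b - P) < d + i ->
  d <= A - b - l * c - (b - P - l * g) - l * (c - g - l * T) ->
  2 * l * (c - g) <= l ^+ 2 * T + i.
Proof. move=> *; nra. Qed.

Lemma inv_le (N n : nat) : (N <= n)%N -> n.+1%:R^-1 <= N.+1%:R^-1 :> R.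
Proof. by move=> h; rewrite lef_pV2 ?posrE ?ltr0Sn // ler_nat ltnS. Qed.

Lemma inv_gt0 (n : nat) : 0 < n.+1%:R^-1 :> R.
Proof. by rewrite invr_gt0 ltr0Sn. Qed.

Lemma proj (S : V -> Prop) : subspace S -> hclosed S ->
  forall x, exists s, S s /\ forall t, S t -> ip (x - s) t = 0.
Proof.
move=> [S0 Slin] Scl x.
have SZ a y : S y -> S (a *: y) by move=> Sy; have := Slin a y 0 Sy S0; rewrite addr0.
have SD y z : S y -> S z -> S (y + z) by move=> Sy Sz; have := Slin 1 y z Sy Sz; rewrite scale1r.
pose E : set R := fun r => exists s, S s /\ r = ip (x - s) (x - s).
have hE : has_inf E.
  split; first by exists (ip (x - 0) (x - 0)); exists 0.
  by exists 0 => r [s [_ ->]]; exact: hip_ge0.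
set δ := inf E.
have lb s : S s -> δ <= ip (x - s) (x - s).
  by move=> Ss; have h := ge_inf hE.2; apply: h; exists s.
have ex (n : nat) : exists s, S s /\ ip (x - s) (x - s) < δ + n.+1%:R^-1.
  have [r [s [Ss ->]] hr] := inf_adherent (inv_gt0 n) hE.
  by exists s.
pose sn n := proj1_sig (cid (ex n)).
have snP n : S (sn n) /\ ip (x - sn n) (x - sn n) < δ + n.+1%:R^-1 := proj2_sig (cid (ex n)).
have cauchy m n : ip (sn n - sn m) (sn n - sn m) <= 2 * n.+1%:R^-1 + 2 * m.+1%:R^-1.
  have [Sn hn] := snP n; have [Sm hm] := snP m.
  have Smid : S (2^-1 *: sn n + 2^-1 *: sn m) by apply: SD; apply: SZ.
  have := lb _ Smid.
  move: hn hm; rewrite !ipE.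
  rewrite (@hip_sym R H (sn n) x) (@hip_sym R H (sn m) x) (@hip_sym R H (sn m) (sn n)).
  exact: para_aux.
have [s [Ss conv]] : exists s, S s /\ hconv sn s.
  have [s hs] : exists s, hconv sn s.
    apply: hip_complete => e e0.
    have [N hN] := @ltr_add_invr R 0 (e ^+ 2 / 4) (ltac:(apply: divr_gt0 => //; exact: exprn_gt0)).
    exists N => m n Nm Nn; apply: sq_lt_sqrt => //.
    move: hN; rewrite add0r; exact: (cauchy_aux _ _ _ _ _ (cauchy n m) (inv_le _ _ Nm) (inv_le _ _ Nn)).
  exists s; split => //; apply: (Scl sn s) => // n; exact: (snP n).1.
exists s; split => // t St.
set a := ip (x - s) t; set T := ip t t.
have T0 : 0 <= T by exact: hip_ge0.
have key n (l : R) : 2 * l * (a + ip (s - sn n) t) <= l ^+ 2 * T + n.+1%:R^-1.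
  have [Sn hn] := snP n.
  have := lb (sn n + l *: t) (SD _ _ Sn (SZ l _ St)).
  have -> : x - (sn n + l *: t) = (x - sn n) - l *: t by rewrite opprD addrA.
  have -> : a + ip (s - sn n) t = ip (x - sn n) t by rewrite /a -ipDl addrA subrK.
  move: hn; rewrite !ipE /T (@hip_sym R H (sn n) x) (@hip_sym R H t x) (@hip_sym R H t (sn n)).
  exact: key_aux.
set l := a / (T + 1).
have main : 2 * l * a <= l ^+ 2 * T.
  apply/ler_addgt0Pr => eps e0.
  have [N1 hN1] := @ltr_add_invr R 0 (eps / 2) (ltac:(by apply: divr_gt0)).
  set P := l ^+ 2 * T.
  have P0 : 0 <= P by rewrite /P mulr_ge0 // sqr_ge0.
  have e'0 : 0 < eps / (4 * (P + 1)) by apply: divr_gt0 => //; apply: mulr_gt0 => //; lra.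
  have [N2 hN2] := conv _ e'0.
  pose n := maxn N1 N2.
  have h1 := hN2 n (leq_maxr _ _).
  have h2 := inv_le _ _ (leq_maxl N1 N2).
  have := key n l.
  set w := ip (s - sn n) t.
  have hw : w ^+ 2 <= ip (sn n - s) (sn n - s) * T.
    have := ipCS (s - sn n) t; rewrite -/w.
    rewrite (_ : s - sn n = - (sn n - s)); last by rewrite opprB.
    by rewrite ipNl ipNr opprK.
  move=> hk.
  apply: (fin_aux T0 _ e0 hk h2 hN1 _ hw); first exact: hip_ge0.
  by apply: sqrt_lt_sq => //; exact: hip_ge0.
exact: zero_aux T0 main.
Qed.
Lemma sq_add2 (x y : V) : ip (x + y) (x + y) <= 2 * ip x x + 2 * ip y y.
Proof. have := ip2 x y; rewrite !ipE (@hip_sym R H y x); lra. Qed.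

Lemma sq_add3 (x y z : V) : ip (x + y + z) (x + y + z) <= 3 * (ip x x + ip y y + ip z z).
Proof.
have := ip2 x y; have := ip2 y z; have := ip2 x z.
rewrite !ipE (@hip_sym R H y x) (@hip_sym R H z x) (@hip_sym R H z y); lra.
Qed.

Lemma ipNN (x : V) : ip (- x) (- x) = ip x x.
Proof. by rewrite ipNl ipNr opprK. Qed.

Lemma hnorm_eq0 (x : V) : hnorm x = 0 -> x = 0.
Proof.
move=> /eqP; rewrite sqrtr_eq0 => h; apply: hip_def; apply/eqP.
by rewrite eq_le h hip_ge0.
Qed.
End HSL.
Arguments sq_add2 {R H}. Arguments sq_add3 {R H}. Arguments ipNN {R H}. Arguments hnorm_eq0 {R H}.
Arguments ip0l {R H}. Arguments ipDl {R H}. Arguments ipZl {R H}. Arguments ipNl {R H}.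
Arguments ipBl {R H}. Arguments ip0r {R H}. Arguments ipDr {R H}. Arguments ipZr {R H}.
Arguments ipNr {R H}. Arguments ipBr {R H}. Arguments ip2 {R H}. Arguments ipCS {R H}.
Arguments hnorm_ge0 {R H}. Arguments hnorm_sq {R H}. Arguments proj {R H}.

Set Implicit Arguments. Unset Strict Implicit.
Section Cx.
Variables (R : realType) (X : hcomplex R).

Lemma dom0 k : dom X k 0. Proof. by case: (dom_subspace R X k). Qed.
Lemma domL k a x y : dom X k x -> dom X k y -> dom X k (a *: x + y).
Proof. by case: (dom_subspace R X k) => _; apply. Qed.
Lemma domD k x y : dom X k x -> dom X k y -> dom X k (x + y).
Proof. by move=> hx hy; have := domL 1 hx hy; rewrite scale1r. Qed.
Lemma domZ k a x : dom X k x -> dom X k (a *: x).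
Proof. by move=> hx; have := domL a hx (dom0 k); rewrite addr0. Qed.
Lemma domN k x : dom X k x -> dom X k (- x).
Proof. by move=> hx; rewrite -scaleN1r; exact: domZ. Qed.
Lemma domB k x y : dom X k x -> dom X k y -> dom X k (x - y).
Proof. by move=> hx hy; apply: domD => //; exact: domN. Qed.

Lemma d0 k : d X (0 : hcar (W X k)) = 0.
Proof.
have := d_lin R X k 1 0 0 (dom0 k) (dom0 k); rewrite scale1r addr0 scale1r => e.
by have := congr1 (fun t => t - d X (0 : hcar (W X k))) e; rewrite subrr addrK.
Qed.
Lemma dD k (x y : hcar (W X k)) : dom X k x -> dom X k y -> d X (x + y) = d X x + d X y.
Proof. by move=> hx hy; have := d_lin R X k 1 x y hx hy; rewrite !scale1r. Qed.
Lemma dZ k a (x : hcar (W X k)) : dom X k x -> d X (a *: x) = a *: d X x.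
Proof. by move=> hx; have := d_lin R X k a x 0 hx (dom0 k); rewrite !addr0 d0 addr0. Qed.
Lemma dN k (x : hcar (W X k)) : dom X k x -> d X (- x) = - d X x.
Proof. by move=> hx; rewrite -scaleN1r dZ // scaleN1r. Qed.
Lemma dB k (x y : hcar (W X k)) : dom X k x -> dom X k y -> d X (x - y) = d X x - d X y.
Proof. by move=> hx hy; rewrite dD ?dN //; exact: domN. Qed.

Lemma hconv0 k : hconv (fun _ : nat => (0 : hcar (W X k))) 0.
Proof.
move=> e e0; exists 0%N => n _; rewrite /hnorm subr0 ip0l sqrtr0 //.
Qed.

Lemma Zsub k : subspace (@Zk R X k).
Proof.
split; first by split; [exact: dom0 | exact: d0].
move=> a x y [hx dx] [hy dy]; split; first exact: domL.
by rewrite (d_lin R X) // dx dy scaler0 addr0.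
Qed.

Lemma Zcl k : hclosed (@Zk R X k).
Proof.
move=> u x hu hc; have := d_closed_op R X k u x 0 (fun n => (hu n).1) hc.
have -> : (fun n => d X (u n)) = (fun _ => 0) by apply: funext => n; exact: (hu n).2.
by move/(_ (hconv0 _)).
Qed.

Lemma Bsub k : subspace (@Bk R X k).
Proof.
split; first by exists 0; split; [exact: dom0 | exact: d0].
move=> a x y [x' [hx <-]] [y' [hy <-]]; exists (a *: x' + y'); split; first exact: domL.
exact: (d_lin R X).
Qed.

Lemma ZB k (b : hcar (W X k.+1)) : Bk b -> Zk b.
Proof. by move=> [x [hx <-]]; split; [exact: (d_dom R X) | exact: (d_dd R X)]. Qed.

Lemma zperp_proj k (x : hcar (W X k)) : dom X k x ->
  exists s, Zk s /\ dom X k (x - s) /\ d X (x - s) = d X x /\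
    forall z, Zk z -> hip (W X k) (x - s) z = 0.
Proof.
move=> hx; have [s [[hs ds] ort]] := @proj R (W X k) _ (@Zsub k) (@Zcl k) x.
exists s; split; first by [].
split; first exact: domB.
split; last exact: ort.
by rewrite dB // ds subr0.
Qed.

Lemma Zk_sub k (x y : hcar (W X k)) : Zk x -> Zk y -> Zk (x - y).
Proof. by move=> [hx dx] [hy dy]; split; [exact: domB | rewrite dB // dx dy subr0]. Qed.

Lemma vnorm_eq0 k (x : hcar (W X k)) : vnorm x = 0 -> x = 0.
Proof.
move=> /eqP; rewrite sqrtr_eq0 /vip => h; apply: hip_def; apply/eqP.
have := hip_ge0 (d X x); have := hip_ge0 x; move: h; rewrite eq_le => h h1 h2.
by rewrite h1 andbT; lra.
Qed.

Lemma Bform_zero k (s : hcar (W X k)) (u p : hcar (W X k.+1)) : Bform s u p 0 0 0 = 0.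
Proof. by rewrite /Bform !d0 !ip0r !(subr0, addr0). Qed.
End Cx.

Lemma vip_ge0 (R : realType) (X : hcomplex R) k (x : hcar (W X k)) : 0 <= vip x x.
Proof. by rewrite /vip addr_ge0 // hip_ge0. Qed.

Lemma vnorm_sq (R : realType) (X : hcomplex R) k (x : hcar (W X k)) : vnorm x ^+ 2 = vip x x.
Proof. by rewrite /vnorm sqr_sqrtr // vip_ge0. Qed.

Lemma le_abs (R : realType) (a b c : R) : 0 <= b -> a <= c * b -> a <= `|c| * b.
Proof. by move=> b0 h; apply: (le_trans h); apply: ler_wpM2r => //; exact: ler_norm. Qed.

Lemma disc_poincare (R : realType) (X Y : hcomplex R)
  (i : forall k, hcar (W Y k) -> hcar (W X k)) (p : forall k, hcar (W X k) -> hcar (W Y k))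
  (cP Ci Cpi : R) :
  ext_morphism i -> dmorphism p -> (forall k x, dom Y k x -> p k (i k x) = x) -> poincare X cP ->
  (forall k x, hnorm (i k x) <= Ci * hnorm x) ->
  (forall k x, dom X k x -> vnorm (p k x) <= Cpi * vnorm x) ->
  forall k (v : hcar (W Y k)), dom Y k v -> (forall z, Zk z -> hip (W Y k) v z = 0) ->
  vip v v <= (1 + `|cP| * `|Ci| * `|Cpi|) ^+ 2 * hip (W Y k.+1) (d Y v) (d Y v).
Proof.
move=> [ilin _ idom id] [plin _ pdom pd] pi hP hCi hCpi k v hv hort.
have hz : dom X k (i k v) := idom k v hv.
have [s [Zs [hz' [dz' ort']]]] := zperp_proj hz.
set zp := i k v - s in hz' dz' ort'.
have zpP : Zperp zp.
  split => // w [hw dw]; rewrite /vip ort'; last by split.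
  by rewrite dw ip0r add0r.
have P1 := hP k zp zpP.
have dzp : d X zp = i k.+1 (d Y v) by rewrite dz' id.
have hw : dom Y k (p k zp) := pdom k zp hz'.
have dw : d Y (p k zp) = d Y v.
  by rewrite -pd // dzp pi //; exact: (d_dom R Y).
have P2 := hCpi k zp hz'.
have P3 := hCi k.+1 (d Y v).
set w := p k zp in hw dw P2.
have hvw : hip (W Y k) v v = hip (W Y k) v w.
  have := hort (v - w) (conj (domB hv hw) _).
  rewrite dB // dw subrr => /(_ erefl).
  rewrite ipBr => e; have := congr1 (fun t => t + hip (W Y k) v w) e.
  by rewrite subrK add0r.
have vw : vip v v <= vip w w.
  have a1 := ip2 v w; have a2 := ip2 (d Y v) (d Y w).
  move: a1 a2; rewrite /vip dw -hvw; lra.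
have Q1 : vnorm w <= `|Cpi| * vnorm zp by apply: le_abs => //; exact: sqrtr_ge0.
have Q2 : vnorm zp <= `|cP| * hnorm (d X zp) by apply: le_abs => //; exact: sqrtr_ge0.
have Q3 : hnorm (d X zp) <= `|Ci| * hnorm (d Y v) by rewrite dzp; apply: le_abs => //; exact: sqrtr_ge0.
have n0 : 0 <= hnorm (d Y v) by exact: sqrtr_ge0.
have nw : 0 <= vnorm w by exact: sqrtr_ge0.
have Q : vnorm w <= (1 + `|cP| * `|Ci| * `|Cpi|) * hnorm (d Y v).
  have c1 := normr_ge0 cP; have c2 := normr_ge0 Ci; have c3 := normr_ge0 Cpi.
  have := ler_wpM2l c3 Q2; have := ler_wpM2l (mulr_ge0 c3 c1) Q3.
  have : 0 <= `|cP| * `|Ci| * `|Cpi| * hnorm (d Y v) by rewrite !mulr_ge0.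
  nra.
apply: (le_trans vw); rewrite -vnorm_sq -hnorm_sq -exprMn.
by apply: lerXn2r => //; rewrite nnegrE // mulr_ge0 // addr_ge0 // !mulr_ge0.
Qed.

Lemma sum3 (R : realType) (a b c : R) : (a + b + c) ^+ 2 <= 3 * (a ^+ 2 + b ^+ 2 + c ^+ 2).
Proof.
have := sqr_ge0 (a - b); have := sqr_ge0 (b - c); have := sqr_ge0 (a - c).
rewrite !sqrrB; have -> : (a + b + c) ^+ 2 = a ^+ 2 + b ^+ 2 + c ^+ 2 + 2 * (a * b) + 2 * (b * c) + 2 * (a * c) by ring.
rewrite !mulr2n; lra.
Qed.

Lemma final_aux (R : realType) (t c1 g ss sds sB sH sP sdu sp sr csr Vt Vv Vq B a b c a' b' c' : R) :
  1 <= t -> c1 * t = 1 -> g * (24 * (t + 1)) = c1 ->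
  0 <= ss -> 0 <= sds -> 0 <= sB -> 0 <= sH -> 0 <= sP -> 0 <= sdu -> 0 <= sp -> 0 <= sr ->
  sr + sB <= t * sB -> sP + sdu <= t * sdu -> 2 * (c1 * csr) <= ss + c1 ^+ 2 * sr ->
  B = ss - c1 * csr + c1 * sB + sds + sdu + sp + sH ->
  Vt <= 2 * ss + 2 * (c1 ^+ 2 * sr) + (2 * sds + 2 * (c1 ^+ 2 * sB)) ->
  Vv <= 3 * ((sB + sH + sP) + sds + sp) + sdu ->
  Vq <= 2 * sp + 2 * sH ->
  0 <= a -> 0 <= b -> 0 <= c -> 0 <= a' -> 0 <= b' -> 0 <= c' ->
  a ^+ 2 = ss + sds -> b ^+ 2 = sB + sH + sP + sdu -> c ^+ 2 = sp ->
  a' ^+ 2 = Vt -> b' ^+ 2 = Vv -> c' ^+ 2 = Vq ->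
  g * (a + b + c) * (a' + b' + c') <= B /\ (0 < a + b + c -> 0 < B).
Proof.
move=> t1 c1t gE ss0 sds0 sB0 sH0 sP0 sdu0 sp0 sr0 hr hP hcs BE hVt hVv hVq
  a0 b0 c0 a'0 b'0 c'0 ea eb ec ea' eb' ec'.
have c10 : 0 < c1 by nra.
have c11 : c1 <= 1 by nra.
have g0 : 0 < g by nra.
set Sin := ss + sds + sB + sH + sP + sdu + sp.
have Sin0 : 0 <= Sin by rewrite /Sin; lra.
have r1 : c1 ^+ 2 * (sr + sB) <= c1 * sB.
  have : c1 ^+ 2 * (sr + sB) <= c1 ^+ 2 * (t * sB) by apply: ler_wpM2l => //; exact: sqr_ge0.
  have -> : c1 ^+ 2 * (t * sB) = c1 * sB * (c1 * t) by ring.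
  by rewrite c1t mulr1.
have r2 : c1 * sB <= sB by nra.
have Sout : Vt + Vv + Vq <= 5 * Sin.
  rewrite /Sin; have : 0 <= c1 ^+ 2 * sr by rewrite mulr_ge0 // sqr_ge0.
  have : 0 <= c1 ^+ 2 * sB by rewrite mulr_ge0 // sqr_ge0.
  lra.
have N2 : (a + b + c) ^+ 2 <= 3 * Sin.
  have := @sum3 _ a b c.
  rewrite ea eb ec /Sin; lra.
have M2 : (a' + b' + c') ^+ 2 <= 3 * (Vt + Vv + Vq).
  have := @sum3 _ a' b' c'.
  by rewrite ea' eb' ec'.
have NM : (a + b + c) * (a' + b' + c') <= 9 * Sin.
  have : 2 * ((a + b + c) * (a' + b' + c')) <= (a + b + c) ^+ 2 + (a' + b' + c') ^+ 2.
    have := sqr_ge0 ((a + b + c) - (a' + b' + c')); rewrite sqrrB mulr2n; lra.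
  lra.
have Blow : 12 * g * Sin <= B.
  have h1 : c1 * csr <= 2^-1 * ss + 2^-1 * (c1 * sB).
    have q0 : 0 <= c1 ^+ 2 * sB by rewrite mulr_ge0 // sqr_ge0.
    move: r1; rewrite mulrDr; lra.
  have h2 : 12 * g * (t + 1) = 2^-1 * c1 by rewrite -gE; field.
  have h3 : 12 * g <= 2^-1 * c1 by nra.
  have h4 : 12 * g * (sP + sdu) <= 12 * g * (t * sdu) by apply: ler_wpM2l => //; lra.
  have h5 : 12 * g * (t * sdu) <= sdu.
    have : 12 * g * t <= 1 by nra.
    nra.
  rewrite /Sin BE; nra.
split.
  have : g * ((a + b + c) * (a' + b' + c')) <= g * (9 * Sin) by apply: ler_wpM2l => //; lra.
  have gs : 0 <= g * Sin by rewrite mulr_ge0 // ltW.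
  rewrite mulrA; nra.
move=> Np; have : 0 < Sin.
  have : 0 < (a + b + c) ^+ 2 by exact: exprn_gt0.
  have : (a + b + c) ^+ 2 <= 3 * Sin by [].
  lra.
move=> Sp; have : 0 < 12 * g * Sin by rewrite !mulr_gt0.
lra.
Qed.

Unset Implicit Arguments.
Definition Gam (R : realType) (cP Ci Cpi : R) : R :=
  ((1 + `|cP| * `|Ci| * `|Cpi|) ^+ 2)^-1 / (24 * ((1 + `|cP| * `|Ci| * `|Cpi|) ^+ 2 + 1)).

Theorem mainTheorem8 (R : realType) :
  exists Gamma : R -> R -> R -> R,
  forall (X : hcomplex R) (Y : R -> hcomplex R)
    (ih : forall h k, hcar (W (Y h) k) -> hcar (W X k))
    (pih : forall h k, hcar (W X k) -> hcar (W (Y h) k)),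
    closed_complex X ->
    (forall h, 0 < h -> closed_complex (Y h)) ->
    (forall h, 0 < h -> ext_morphism (ih h)) ->
    (exists C : R, forall h, 0 < h -> forall k x, hnorm (ih h k x) <= C * hnorm x) ->
    (forall h, 0 < h -> dmorphism (pih h)) ->
    (forall h, 0 < h -> forall k x, dom (Y h) k x -> pih h k (ih h k x) = x) ->
    forall cP : R, poincare X cP ->
    forall h : R, 0 < h ->
    forall Ci Cpi : R,
      (forall k x, hnorm (ih h k x) <= Ci * hnorm x) ->
      (forall k x, dom X k x -> vnorm (pih h k x) <= Cpi * vnorm x) ->
      0 < Gamma cP Ci Cpi /\
      forall (k : nat) (sigma : hcar (W (Y h) k)) (u p : hcar (W (Y h) k.+1)),
        dom (Y h) k sigma -> dom (Y h) k.+1 u -> harmonic p ->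
        exists (tau : hcar (W (Y h) k)) (v q : hcar (W (Y h) k.+1)),
          [/\ dom (Y h) k tau, dom (Y h) k.+1 v, harmonic q,
              0 < vnorm sigma + vnorm u + hnorm p -> 0 < vnorm tau + vnorm v + hnorm q
            & Bform sigma u p tau v q >=
                Gamma cP Ci Cpi * (vnorm sigma + vnorm u + hnorm p)
                                * (vnorm tau + vnorm v + hnorm q)].
Proof.
exists (@Gam R).
move=> X Y ih pih clX clY ihm _ pihm pi cP hP h h0 Ci Cpi hCi hCpi.
have DP := disc_poincare (ihm h h0) (pihm h h0) (pi h h0) hP hCi hCpi.
rewrite /Gam.
set t := (1 + `|cP| * `|Ci| * `|Cpi|) ^+ 2 in DP *.
have t1 : 1 <= t.
  have : 0 <= `|cP| * `|Ci| * `|Cpi| by rewrite !mulr_ge0.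
  rewrite /t; set K := `|cP| * `|Ci| * `|Cpi| => K0; nra.
have t0 : 0 < t by lra.
set c1 := t^-1.
set g := c1 / (24 * (t + 1)).
have g0 : 0 < g by rewrite /g divr_gt0 // ?invr_gt0 // mulr_gt0 //; lra.
split => // k σ u p hσ hu hp.

have [uZ [ZuZ [huP [duP ortP]]]] := zperp_proj hu.
set uP := u - uZ in huP duP ortP.
have [uB [BuB ortH]] := @proj R (W (Y h) k.+1) _ (@Bsub _ (Y h) k) (clY h h0 k) uZ.
set uH := uZ - uB in ortH.
have ZuB := ZB BuB.
have ZuH : Zk uH := Zk_sub ZuZ ZuB.
have [x0 [hx0 dx0]] := BuB.
have [s0 [Zs0 [hρ [dρ ortρ]]]] := zperp_proj hx0.
set ρ := x0 - s0 in hρ dρ ortρ.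
rewrite dx0 in dρ.
have Pρ := DP k ρ hρ ortρ.
have PuP := DP k.+1 uP huP ortP.
rewrite dρ in Pρ; rewrite duP in PuP.
have uE : u = uB + uH + uP by rewrite /uH /uP [uB + _]addrC subrK addrC subrK.
clearbody uP uH ρ.
have oHB : hip (W (Y h) k.+1) uH uB = 0 by exact: ortH.
have oPB : hip (W (Y h) k.+1) uP uB = 0 by exact: ortP.
have oPH : hip (W (Y h) k.+1) uP uH = 0 by exact: ortP.
have Bds : Bk (d (Y h) σ) by exists σ.
have [[hpd dp0] ortp] := hp.
have opd : hip (W (Y h) k.+1) p (d (Y h) σ) = 0 by exact: ortp.
have hds : dom (Y h) k.+1 (d (Y h) σ) := d_dom R (Y h) k σ hσ.
have dds : d (Y h) (d (Y h) σ) = 0 := d_dd R (Y h) k σ hσ.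
have fuB : hip (W (Y h) k.+1) u uB = hip (W (Y h) k.+1) uB uB.
  by rewrite {1}uE !ipDl oHB oPB !addr0.
have fuH : hip (W (Y h) k.+1) u uH = hip (W (Y h) k.+1) uH uH.
  by rewrite {1}uE !ipDl (@hip_sym R (W (Y h) k.+1) uB) oHB oPH add0r addr0.
have fuu : hip (W (Y h) k.+1) u u = hip (W (Y h) k.+1) uB uB + hip (W (Y h) k.+1) uH uH + hip (W (Y h) k.+1) uP uP.
  rewrite {1 2}uE !(ipDl, ipDr).
  rewrite (@hip_sym R (W (Y h) k.+1) uB uH) (@hip_sym R (W (Y h) k.+1) uB uP) (@hip_sym R (W (Y h) k.+1) uH uP).
  rewrite oHB oPB oPH; lra.
pose τ := σ - c1 *: ρ.
pose v := u + d (Y h) σ + p.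
pose q := p - uH.
have hτ : dom (Y h) k τ by apply: domB => //; exact: domZ.
have hv : dom (Y h) k.+1 v by apply: domD => //; exact: domD.
have dτ : d (Y h) τ = d (Y h) σ - c1 *: uB by rewrite /τ dB // ?dZ // ?dρ //; exact: domZ.
have dv : d (Y h) v = d (Y h) u.
  by rewrite /v !dD // ?dds ?dp0 ?addr0 //; exact: domD.
have hq : harmonic q.
  split; first exact: Zk_sub.
  by move=> b Bb; rewrite /q ipBl ortp // ortH // subr0.
have _ := @final_aux R t c1 g
  (hip _ σ σ) (hip _ (d (Y h) σ) (d (Y h) σ)) (hip _ uB uB) (hip _ uH uH) (hip _ uP uP)
  (hip _ (d (Y h) u) (d (Y h) u)) (hip _ p p) (hip _ ρ ρ) (hip _ σ ρ)
  (vip τ τ) (vip v v) (hip _ q q) (Bform σ u p τ v q)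
  (vnorm σ) (vnorm u) (hnorm p) (vnorm τ) (vnorm v) (hnorm q).
have c1t : c1 * t = 1 by rewrite /c1 mulVf // lt0r_neq0.
have gE : g * (24 * (t + 1)) = c1 by rewrite /g mulfVK // mulf_neq0 // lt0r_neq0 //; lra.
have hr : hip _ ρ ρ + hip _ uB uB <= t * hip _ uB uB by move: Pρ; rewrite /vip dρ.
have hPP : hip _ uP uP + hip _ (d (Y h) u) (d (Y h) u) <= t * hip _ (d (Y h) u) (d (Y h) u) by move: PuP; rewrite /vip duP.
have hcs : 2 * (c1 * hip _ σ ρ) <= hip _ σ σ + c1 ^+ 2 * hip _ ρ ρ.
  have := ip2 σ (c1 *: ρ); rewrite !ipZl !ipZr expr2 !mulrA; lra.
have BE : Bform σ u p τ v q = hip _ σ σ - c1 * hip _ σ ρ + c1 * hip _ uB uB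
   + hip _ (d (Y h) σ) (d (Y h) σ) + hip _ (d (Y h) u) (d (Y h) u) + hip _ p p + hip _ uH uH.
  rewrite /Bform dτ dv /τ /v /q !(ipDl, ipBl, ipZl, ipNl, ipDr, ipBr, ipZr, ipNr) fuB fuH opd.
  rewrite (@hip_sym R _ (d (Y h) σ) p) opd (@hip_sym R _ (d (Y h) σ) u) (@hip_sym R _ p u).
  lra.
have hVt : vip τ τ <= 2 * hip _ σ σ + 2 * (c1 ^+ 2 * hip _ ρ ρ)
    + (2 * hip _ (d (Y h) σ) (d (Y h) σ) + 2 * (c1 ^+ 2 * hip _ uB uB)).
  rewrite /vip dτ /τ; apply: lerD.
    by have := sq_add2 σ (- (c1 *: ρ)); rewrite ipNN !ipZl !ipZr expr2 !mulrA.
  by have := sq_add2 (d (Y h) σ) (- (c1 *: uB)); rewrite ipNN !ipZl !ipZr expr2 !mulrA.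
have hVv : vip v v <= 3 * ((hip _ uB uB + hip _ uH uH + hip _ uP uP) + hip _ (d (Y h) σ) (d (Y h) σ) + hip _ p p)
    + hip _ (d (Y h) u) (d (Y h) u).
  rewrite /vip dv -fuu; apply: lerD => //; exact: sq_add3.
have hVq : hip _ q q <= 2 * hip _ p p + 2 * hip _ uH uH.
  by have := sq_add2 p (- uH); rewrite ipNN.
have ea : vnorm σ ^+ 2 = hip _ σ σ + hip _ (d (Y h) σ) (d (Y h) σ) by rewrite vnorm_sq.
have eb : vnorm u ^+ 2 = hip _ uB uB + hip _ uH uH + hip _ uP uP + hip _ (d (Y h) u) (d (Y h) u).
  by rewrite vnorm_sq /vip fuu.
have [fin1 fin2] := final_aux t1 c1t gE (hip_ge0 _) (hip_ge0 _) (hip_ge0 _) (hip_ge0 _) (hip_ge0 _)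
  (hip_ge0 _) (hip_ge0 _) (hip_ge0 _) hr hPP hcs BE hVt hVv hVq
  (sqrtr_ge0 _) (sqrtr_ge0 _) (sqrtr_ge0 _) (sqrtr_ge0 _) (sqrtr_ge0 _) (sqrtr_ge0 _)
  ea eb (hnorm_sq p) (vnorm_sq τ) (vnorm_sq v) (hnorm_sq q).
exists τ, v, q; split => //.
  move=> Np; have Bp := fin2 Np.
  have a0 := sqrtr_ge0 (vip τ τ); have b0 := sqrtr_ge0 (vip v v); have c0 := sqrtr_ge0 (hip _ q q).
  have Mge : 0 <= vnorm τ + vnorm v + hnorm q by rewrite /vnorm /hnorm; lra.
  rewrite lt_neqAle Mge andbT; apply/negP => /eqP; rewrite /vnorm /hnorm => M0.
  have τ0 : τ = 0 by apply: vnorm_eq0; rewrite /vnorm; lra.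
  have v0 : v = 0 by apply: vnorm_eq0; rewrite /vnorm; lra.
  have q0 : q = 0 by apply: hnorm_eq0; rewrite /hnorm; lra.
  by move: Bp; rewrite τ0 v0 q0 Bform_zero ltxx.
Qed.
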